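(* Let $n \in \mathbb N$. Then $P^n_{BM}\subsetneq P^n_M \subsetneq P^n_{MB} = P^n_B$.
   Context: $\mathbb R_+=[0,\infty)$. A b-metric on $X$ is $d\colon X^2\to\mathbb R_+$ with $d(x,y)=0\iff x=y$, $d(x,y)=d(y,x)$, and for some $K\geqslant1$, $d(x,z)\leqslant K(d(x,y)+d(y,z))$ for all $x,y,z$; a metric is a b-metric with $K=1$. For $F\colon\mathbb R_+^n\to\mathbb R_+$ and spaces $(X_i,d_i)$ put $D(\mathbf x,\mathbf y)=F(d_1(x_1,y_1),\dots,d_n(x_n,y_n))$ on $\prod_{i=1}^nX_i$. $P^n_{BM}$: the set of $F$ such that $D$ is a metric for every collection of b-metric spaces (arbitrary constants); $P^n_M$: $D$ is a metric for every collection of metric spaces; $P^n_{MB}$: $D$ is a b-metric for every collection of metric spaces; $P^n_B$: $D$ is a b-metric for every collection of b-metric spaces (arbitrary constants). *)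

(* Defs.v *)
From Stdlib Require Import Reals.
From mathcomp Require Import all_boot.

Set Implicit Arguments.
Unset Strict Implicit.

Local Open Scope R_scope.

Definition is_bmetric_K {X : Type} (d : X -> X -> R) (K : R) : Prop :=
  1 <= K /\
  (forall x y, 0 <= d x y) /\
  (forall x y, d x y = 0 <-> x = y) /\
  (forall x y, d x y = d y x) /\
  (forall x y z, d x z <= K * (d x y + d y z)).

Definition is_bmetric {X : Type} (d : X -> X -> R) : Prop :=
  exists K, is_bmetric_K d K.

Definition is_metric {X : Type} (d : X -> X -> R) : Prop := is_bmetric_K d 1.

Definition nonneg_fun (n : nat) (F : ('I_n -> R) -> R) : Prop :=
  forall v : 'I_n -> R, (forall i, 0 <= v i) -> 0 <= F v.

Definition prodD (n : nat) (X : 'I_n -> Type) (d : forall i, X i -> X i -> R)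
  (F : ('I_n -> R) -> R) : (forall i, X i) -> (forall i, X i) -> R :=
  fun x y => F (fun i => d i (x i) (y i)).

Definition P_BM (n : nat) (F : ('I_n -> R) -> R) : Prop :=
  nonneg_fun F /\
  forall (X : 'I_n -> Type) (d : forall i, X i -> X i -> R),
    (forall i, is_bmetric (d i)) -> is_metric (prodD d F).

Definition P_M (n : nat) (F : ('I_n -> R) -> R) : Prop :=
  nonneg_fun F /\
  forall (X : 'I_n -> Type) (d : forall i, X i -> X i -> R),
    (forall i, is_metric (d i)) -> is_metric (prodD d F).

Definition P_MB (n : nat) (F : ('I_n -> R) -> R) : Prop :=
  nonneg_fun F /\
  forall (X : 'I_n -> Type) (d : forall i, X i -> X i -> R),
    (forall i, is_metric (d i)) -> is_bmetric (prodD d F).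

Definition P_B (n : nat) (F : ('I_n -> R) -> R) : Prop :=
  nonneg_fun F /\
  forall (X : 'I_n -> Type) (d : forall i, X i -> X i -> R),
    (forall i, is_bmetric (d i)) -> is_bmetric (prodD d F).

(* Main.v *)
Require Import Defs.
From Stdlib Require Import Reals.
From mathcomp Require Import all_boot.
From Stdlib Require Import Lra ClassicalDescription FunctionalExtensionality.

Local Open Scope R_scope.

Lemma metric_bmetric {X : Type} (d : X -> X -> R) : is_metric d -> is_bmetric d.
Proof. intro H; exists 1; exact H. Qed.

Definition U : Type := (R * R * R)%type.
Definition ud (p q : U) : R :=
  match p, q with (p1, p2, p3), (q1, q2, q3) =>
    Rmax (Rabs (p1 - q1)) (Rmax (Rabs (p2 - q2)) (Rabs (p3 - q3))) end.

Ltac rcases := unfold Rmax, Rabs in *; repeat (destruct Rle_dec); repeat (destruct Rcase_abs); lra.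

Lemma abs_tri a b c : Rabs (a - c) <= Rabs (a - b) + Rabs (b - c).
Proof. unfold Rabs; repeat destruct Rcase_abs; lra. Qed.

Lemma ud_c p1 p2 p3 q1 q2 q3 :
  Rabs (p1 - q1) <= ud (p1,p2,p3) (q1,q2,q3) /\ Rabs (p2 - q2) <= ud (p1,p2,p3) (q1,q2,q3) /\ Rabs (p3 - q3) <= ud (p1,p2,p3) (q1,q2,q3).
Proof.
  simpl. split; [apply Rmax_l|split].
  - eapply Rle_trans; [apply Rmax_l|apply Rmax_r].
  - eapply Rle_trans; [apply Rmax_r|apply Rmax_r].
Qed.

Lemma ud_metric : is_metric ud.
Proof.
  split; [lra|]. split; [|split; [|split]].
  - intros [[p1 p2] p3] [[q1 q2] q3].
    destruct (ud_c p1 p2 p3 q1 q2 q3) as [H _]. pose proof (Rabs_pos (p1 - q1)). lra.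
  - intros [[p1 p2] p3] [[q1 q2] q3]; split.
    + intro H. destruct (ud_c p1 p2 p3 q1 q2 q3) as [H1 [H2 H3]]. rewrite H in H1, H2, H3.
      assert (p1 = q1) by (unfold Rabs in H1; destruct Rcase_abs; lra).
      assert (p2 = q2) by (unfold Rabs in H2; destruct Rcase_abs; lra).
      assert (p3 = q3) by (unfold Rabs in H3; destruct Rcase_abs; lra).
      subst; reflexivity.
    + intro H; injection H; intros -> -> ->. simpl. rewrite !Rminus_diag Rabs_R0 !Rmax_left; lra.
  - intros [[p1 p2] p3] [[q1 q2] q3]; simpl.
    rewrite (Rabs_minus_sym p1) (Rabs_minus_sym p2) (Rabs_minus_sym p3). reflexivity.
  - intros [[p1 p2] p3] [[q1 q2] q3] [[r1 r2] r3].
    destruct (ud_c p1 p2 p3 q1 q2 q3) as [A1 [A2 A3]].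
    destruct (ud_c q1 q2 q3 r1 r2 r3) as [B1 [B2 B3]].
    pose proof (abs_tri p1 q1 r1). pose proof (abs_tri p2 q2 r2). pose proof (abs_tri p3 q3 r3).
    simpl (ud (p1,p2,p3) (r1,r2,r3)).
    apply Rmax_lub; [|apply Rmax_lub]; lra.
Qed.

Lemma ud_tri a b c : 0 <= a -> 0 <= b -> 0 <= c -> a <= b + c -> b <= a + c -> c <= a + b ->
  ud (0, b, a) (a, c, 0) = a /\ ud (0, b, a) (b, 0, c) = b /\ ud (b, 0, c) (a, c, 0) = c.
Proof. intros; simpl; split; [|split]; unfold Rmax, Rabs; repeat (destruct Rle_dec); repeat (destruct Rcase_abs); lra. Qed.

Lemma ud_zero t : 0 <= t -> ud (0,0,0) (t,0,0) = t.
Proof. intros; simpl; rcases. Qed.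

Section Main.
Variable n : nat.
Variable F : ('I_n -> R) -> R.
Hypothesis HF : P_MB F.

Lemma triK : exists K0, 1 <= K0 /\ forall a b c : 'I_n -> R,
  (forall i, 0 <= a i /\ 0 <= b i /\ 0 <= c i /\ a i <= b i + c i /\ b i <= a i + c i /\ c i <= a i + b i) ->
  F a <= K0 * (F b + F c).
Proof.
  destruct HF as [_ H].
  destruct (H (fun _ => U) (fun _ => ud) (fun _ => ud_metric)) as [K0 [HK1 [_ [_ [_ Htri]]]]].
  exists K0; split; auto. intros a b c Habc.
  specialize (Htri (fun i => (0, b i, a i)) (fun i => (b i, 0, c i)) (fun i => (a i, c i, 0))).
  unfold prodD in Htri; cbv beta in Htri.
  assert (Ea : (fun i => ud (0, b i, a i) (a i, c i, 0)) = a).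
  { apply functional_extensionality; intro i. destruct (Habc i) as (?&?&?&?&?&?). apply ud_tri; auto. }
  assert (Eb : (fun i => ud (0, b i, a i) (b i, 0, c i)) = b).
  { apply functional_extensionality; intro i. destruct (Habc i) as (?&?&?&?&?&?). apply ud_tri; auto. }
  assert (Ec : (fun i => ud (b i, 0, c i) (a i, c i, 0)) = c).
  { apply functional_extensionality; intro i. destruct (Habc i) as (?&?&?&?&?&?). apply ud_tri; auto. }
  rewrite Ea Eb Ec in Htri. exact Htri.
Qed.

Lemma zero_char v : (forall i, 0 <= v i) -> (F v = 0 <-> forall i, v i = 0).
Proof.
  intro Hv. destruct HF as [_ H].
  destruct (H (fun _ => U) (fun _ => ud) (fun _ => ud_metric)) as [K0 [_ [_ [Hz _]]]].
  specialize (Hz (fun _ => (0,0,0)) (fun i => (v i, 0, 0))).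
  unfold prodD in Hz; cbv beta in Hz.
  assert (E : (fun i => ud (0,0,0) (v i,0,0)) = v).
  { apply functional_extensionality; intro i; apply ud_zero; auto. }
  rewrite E in Hz. rewrite Hz. split.
  - intros Heq i. pose proof (equal_f Heq i) as Hi. simpl in Hi. injection Hi. intros; auto.
  - intros Hi. apply functional_extensionality; intro i. rewrite Hi. reflexivity.
Qed.

Lemma fin_bound (P : 'I_n -> R -> Prop) : (forall i, exists K, P i K) ->
  exists M, forall i, exists K, P i K /\ K <= M.
Proof.
  intro HP.
  assert (L : forall l : seq 'I_n, exists M, forall i, i \in l -> exists K, P i K /\ K <= M).
  { induction l as [|j l IH].
    - exists 0. intros i Hi. rewrite in_nil in Hi. discriminate.
    - destruct IH as [M' HM']. destruct (HP j) as [Kj HKj].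
      exists (Rmax Kj M'). intros i Hi. rewrite in_cons in Hi.
      destruct (i == j) eqn:E.
      + move/eqP: E => ->. exists Kj; split; auto. apply Rmax_l.
      + simpl in Hi. destruct (HM' i Hi) as [K [HK1 HK2]]. exists K; split; auto.
        eapply Rle_trans; [exact HK2| apply Rmax_r]. }
  destruct (L (enum 'I_n)) as [M HM]. exists M. intro i. apply HM. by rewrite mem_enum.
Qed.

Lemma pow2_ge m : INR m <= 2 ^ m.
Proof.
  induction m as [|m IH]; simpl; [lra|].
  assert (1 <= 2 ^ m) by (apply pow_R1_Rle; lra).
  destruct m; simpl in *; lra.
Qed.

Lemma exists_pow2 M : exists m : nat, M <= 2 ^ m.
Proof.
  destruct (INR_archimed 1 M) as [m Hm]; [lra|].
  exists m. pose proof (pow2_ge m). lra.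
Qed.

Lemma P_MB_P_B : P_B F.
Proof.
  pose proof HF as [Hnn _].
  destruct triK as [K0 [HK0 Htri]].
  assert (Hmono : forall x y, (forall i, 0 <= x i /\ x i <= 2 * y i) -> F x <= 2 * K0 * F y).
  { intros x y Hxy. assert (F x <= K0 * (F y + F y)).
    { apply Htri. intro i. destruct (Hxy i). repeat split; lra. }
    lra. }
  assert (Hiter : forall m x y, (forall i, 0 <= x i /\ x i <= 2 ^ m * y i) -> (forall i, 0 <= y i) ->
            F x <= (2 * K0) ^ (S m) * F y).
  { induction m as [|m IH]; intros x y Hxy Hy.
    - simpl. rewrite Rmult_1_r. apply Hmono. intro i. destruct (Hxy i). simpl in *. pose proof (Hy i). lra.
    - assert (H1 : F x <= (2 * K0) ^ (S m) * F (fun i => 2 * y i)).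
      { apply IH. intro i. destruct (Hxy i). simpl in *. split; lra. intro i. pose proof (Hy i); lra. }
      assert (H2 : F (fun i => 2 * y i) <= 2 * K0 * F y).
      { apply Hmono. intro i. pose proof (Hy i); lra. }
      assert (0 <= (2 * K0) ^ (S m)) by (apply pow_le; lra).
      change ((2 * K0) ^ (S (S m))) with (2 * K0 * (2 * K0) ^ (S m)).
      assert (0 <= F y) by (apply Hnn; auto).
      nra. }
  split; [exact Hnn|].
  intros X d Hd.
  destruct (fin_bound (fun i K => is_bmetric_K (d i) K) Hd) as [M HM].
  destruct (exists_pow2 M) as [m Hm].
  set (C := (2 * K0) ^ (S m)).
  assert (HC : 1 <= C) by (apply pow_R1_Rle; lra).
  assert (Hdnn : forall i a b, 0 <= d i a b).
  { intros i a b. destruct (Hd i) as [K [_ [H _]]]. apply H. }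
  assert (Hdz : forall i a b, d i a b = 0 <-> a = b).
  { intros i. destruct (Hd i) as [K [_ [_ [H _]]]]. apply H. }
  assert (Hds : forall i a b, d i a b = d i b a).
  { intros i. destruct (Hd i) as [K [_ [_ [_ [H _]]]]]. apply H. }
  exists (K0 * C). split; [nra|]. split; [|split; [|split]].
  - intros x y. unfold prodD. apply Hnn. intro i. apply Hdnn.
  - intros x y. unfold prodD. rewrite zero_char; [|intro; apply Hdnn]. split.
    + intro H. apply functional_extensionality_dep. intro i. apply Hdz. apply H.
    + intros -> i. apply Hdz. reflexivity.
  - intros x y. unfold prodD. f_equal. apply functional_extensionality; intro i. apply Hds.
  - intros x y z. unfold prodD.
    set (a := fun i => d i (x i) (z i)). set (b := fun i => d i (x i) (y i)).
    set (c := fun i => d i (y i) (z i)).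
    assert (Hab : forall i, a i <= 2 ^ m * (b i + c i)).
    { intro i. destruct (HM i) as [K [[_ [_ [_ [_ Ht]]]] HKM]].
      pose proof (Ht (x i) (y i) (z i)). unfold a, b, c.
      pose proof (Hdnn i (x i) (y i)). pose proof (Hdnn i (y i) (z i)). nra. }
    set (a1 := fun i => Rmin (a i) (2 ^ m * b i)).
    set (a2 := fun i => a i - a1 i).
    assert (Hp : 0 <= 2 ^ m) by (apply pow_le; lra).
    assert (Hpos : forall i, 0 <= a i /\ 0 <= b i /\ 0 <= c i).
    { intro i; unfold a, b, c; repeat split; apply Hdnn. }
    assert (E1 : F a <= K0 * (F a1 + F a2)).
    { apply Htri. intro i. destruct (Hpos i) as (?&?&?). unfold a2, a1, Rmin.
      destruct Rle_dec; repeat split; nra. }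
    assert (E2 : F a1 <= C * F b).
    { apply Hiter. intro i. destruct (Hpos i) as (?&?&?). unfold a1, Rmin. destruct Rle_dec; split; nra.
      intro i; apply Hpos. }
    assert (E3 : F a2 <= C * F c).
    { apply Hiter. intro i. destruct (Hpos i) as (?&?&?). pose proof (Hab i). unfold a2, a1, Rmin. destruct Rle_dec; split; nra.
      intro i; apply Hpos. }
    assert (0 <= F b) by (apply Hnn; intro; apply Hpos).
    assert (0 <= F c) by (apply Hnn; intro; apply Hpos).
    nra.
Qed.

End Main.

Definition ind {n : nat} (v : 'I_n -> R) : R :=
  if excluded_middle_informative (forall i, v i = 0) then 0 else 1.

Lemma ind_range {n} (v : 'I_n -> R) : 0 <= ind v <= 1.
Proof. unfold ind; destruct excluded_middle_informative; simpl; lra. Qed.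

Lemma ind_zero {n} (v : 'I_n -> R) : ind v = 0 <-> forall i, v i = 0.
Proof. unfold ind; destruct excluded_middle_informative as [H|H]; simpl; split; auto; intros H'; [lra|contradiction]. Qed.

Lemma ind_one {n} (v : 'I_n -> R) (i : 'I_n) : v i <> 0 -> ind v = 1.
Proof. unfold ind; destruct excluded_middle_informative as [H|H]; simpl; auto. intro C; exfalso; auto. Qed.

Lemma ind_tri {n} (X : 'I_n -> Type) (d : forall i, X i -> X i -> R) :
  (forall i a b, d i a b = 0 <-> a = b) ->
  forall x y z, ind (fun i => d i (x i) (z i)) <= ind (fun i => d i (x i) (y i)) + ind (fun i => d i (y i) (z i)).
Proof.
  intros Hz x y z.
  pose proof (ind_range (fun i => d i (x i) (y i))). pose proof (ind_range (fun i => d i (y i) (z i))).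
  unfold ind at 1. destruct excluded_middle_informative as [Hq|Hq]; simpl; [lra|].
  destruct (excluded_middle_informative (forall i, d i (x i) (y i) = 0)) as [H1|H1].
  - destruct (excluded_middle_informative (forall i, d i (y i) (z i) = 0)) as [H2|H2].
    + exfalso; apply Hq. intro i. apply Hz. rewrite (proj1 (Hz _ _ _) (H1 i)). apply Hz, H2.
    + unfold ind at 2. destruct excluded_middle_informative; simpl; [contradiction|lra].
  - unfold ind at 1. destruct excluded_middle_informative; simpl; [contradiction|lra].
Qed.

Lemma abs_metric : is_metric (fun x y : R => Rabs (x - y)).
Proof.
  split; [lra|]. split; [|split; [|split]].
  - intros; apply Rabs_pos.
  - intros x y; split; intro H; [|subst]; rcases.
  - intros; apply Rabs_minus_sym.
  - intros; rcases.
Qed.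

Lemma sq_bmetric : is_bmetric (fun x y : R => (x - y) * (x - y)).
Proof.
  exists 2. split; [lra|]. split; [|split; [|split]].
  - intros x y; cbv beta; exact (Rle_0_sqr (x - y)).
  - intros x y; cbv beta; split; intro H; [|subst; ring]. apply Rmult_integral in H; destruct H; lra.
  - intros; cbv beta; ring.
  - intros x y z; cbv beta.
    assert (E: 2*((x-y)*(x-y) + (y-z)*(y-z)) - (x-z)*(x-z) = ((x-y)-(y-z))*((x-y)-(y-z))) by ring.
    pose proof (Rle_0_sqr ((x-y)-(y-z))). unfold Rsqr in *. lra.
Qed.

Theorem proposition3p3 (n : nat) (hn : (0 < n)%N) :
  (forall F : ('I_n -> R) -> R, P_BM F -> P_M F) /\
  (exists F : ('I_n -> R) -> R, P_M F /\ ~ P_BM F) /\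
  (forall F : ('I_n -> R) -> R, P_M F -> P_MB F) /\
  (exists F : ('I_n -> R) -> R, P_MB F /\ ~ P_M F) /\
  (forall F : ('I_n -> R) -> R, P_MB F <-> P_B F).
Proof.
  destruct n as [|n]; [discriminate|].
  split; [|split; [|split; [|split]]].
  - intros F [Hn H]. split; auto. intros X d Hd. apply H. intro i; apply metric_bmetric, Hd.
  - exists (fun v => v ord0 + ind v). split.
    + split.
      { intros v Hv. pose proof (ind_range v). pose proof (Hv ord0). lra. }
      intros X d Hd. unfold prodD.
      assert (Hz : forall i a b, d i a b = 0 <-> a = b) by (intro i; apply (Hd i)).
      assert (Hnn : forall i a b, 0 <= d i a b) by (intro i; apply (Hd i)).
      split; [lra|]. split; [|split; [|split]].
      * intros x y. pose proof (ind_range (fun i => d i (x i) (y i))). pose proof (Hnn ord0 (x ord0) (y ord0)). lra.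
      * intros x y. split.
        { intro H. pose proof (ind_range (fun i => d i (x i) (y i))). pose proof (Hnn ord0 (x ord0) (y ord0)).
          assert (Hi0 : ind (fun i => d i (x i) (y i)) = 0) by lra.
          apply functional_extensionality_dep; intro i. apply Hz. exact (proj1 (ind_zero _) Hi0 i). }
        { intros ->. rewrite (proj2 (ind_zero _)). rewrite (proj2 (Hz _ _ _)); auto. lra.
          intro i; apply Hz; auto. }
      * intros x y. f_equal. apply (Hd ord0). f_equal. apply functional_extensionality; intro i; apply (Hd i).
      * intros x y z. pose proof (@ind_tri _ X d Hz x y z).
        destruct (Hd ord0) as [_ [_ [_ [_ Ht]]]]. pose proof (Ht (x ord0) (y ord0) (z ord0)). lra.
    + intros [_ H].
      destruct (H (fun _ => R) (fun _ x y => (x - y) * (x - y)) (fun _ => sq_bmetric)) as [_ [_ [_ [_ Ht]]]].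
      specialize (Ht (fun _ => 0) (fun _ => 1) (fun _ => 2)). unfold prodD in Ht; cbv beta in Ht.
      assert (I1 : forall t : R, t <> 0 -> ind (fun _ : 'I_n.+1 => t) = 1)
        by (intros t Ht0; apply (@ind_one _ _ ord0); exact Ht0).
      rewrite (I1 ((0-2)*(0-2)) ltac:(lra)) (I1 ((0-1)*(0-1)) ltac:(lra)) (I1 ((1-2)*(1-2)) ltac:(lra)) in Ht.
      lra.
  - intros F [Hn H]. split; auto. intros X d Hd. apply metric_bmetric, H, Hd.
  - exists (fun v => v ord0 * v ord0 + ind v). split.
    + split.
      { intros v Hv. pose proof (ind_range v). pose proof (Hv ord0). nra. }
      intros X d Hd. unfold prodD.
      assert (Hz : forall i a b, d i a b = 0 <-> a = b) by (intro i; apply (Hd i)).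
      assert (Hnn : forall i a b, 0 <= d i a b) by (intro i; apply (Hd i)).
      exists 2. split; [lra|]. split; [|split; [|split]].
      * intros x y. pose proof (ind_range (fun i => d i (x i) (y i))). pose proof (Hnn ord0 (x ord0) (y ord0)). nra.
      * intros x y. split.
        { intro H. pose proof (ind_range (fun i => d i (x i) (y i))). pose proof (Hnn ord0 (x ord0) (y ord0)).
          assert (Hi0 : ind (fun i => d i (x i) (y i)) = 0) by nra.
          apply functional_extensionality_dep; intro i. apply Hz. exact (proj1 (ind_zero _) Hi0 i). }
        { intros ->. rewrite (proj2 (ind_zero _)). rewrite (proj2 (Hz _ _ _)); auto. lra.
          intro i; apply Hz; auto. }
      * intros x y. f_equal. rewrite (proj1 (proj2 (proj2 (proj2 (Hd ord0))))). reflexivity.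
        f_equal. apply functional_extensionality; intro i; apply (Hd i).
      * intros x y z. pose proof (@ind_tri _ X d Hz x y z).
        pose proof (ind_range (fun i => d i (x i) (y i))). pose proof (ind_range (fun i => d i (y i) (z i))).
        destruct (Hd ord0) as [_ [_ [_ [_ Ht]]]]. pose proof (Ht (x ord0) (y ord0) (z ord0)).
        pose proof (Hnn ord0 (x ord0) (y ord0)). pose proof (Hnn ord0 (y ord0) (z ord0)).
        pose proof (Hnn ord0 (x ord0) (z ord0)).
        set (a := d ord0 (x ord0) (z ord0)) in *. set (b := d ord0 (x ord0) (y ord0)) in *.
        set (c := d ord0 (y ord0) (z ord0)) in *.
        assert (a * a <= (b + c) * (b + c)) by (apply Rmult_le_compat; lra).
        assert (E : 2 * (b * b + c * c) - (b + c) * (b + c) = (b - c) * (b - c)) by ring.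
        pose proof (Rle_0_sqr (b - c)). unfold Rsqr in *. lra.
    + intros [_ H].
      destruct (H (fun _ => R) (fun _ x y => Rabs (x - y)) (fun _ => abs_metric)) as [_ [_ [_ [_ Ht]]]].
      specialize (Ht (fun _ => 0) (fun _ => 1) (fun _ => 2)). unfold prodD in Ht; cbv beta in Ht.
      assert (A1 : Rabs (0 - 2) = 2) by rcases.
      assert (A2 : Rabs (0 - 1) = 1) by rcases.
      assert (A3 : Rabs (1 - 2) = 1) by rcases.
      rewrite A1 A2 A3 in Ht.
      assert (I1 : forall t : R, t <> 0 -> ind (fun _ : 'I_n.+1 => t) = 1)
        by (intros t Ht0; apply (@ind_one _ _ ord0); exact Ht0).
      rewrite (I1 2 ltac:(lra)) (I1 1 ltac:(lra)) in Ht.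
      lra.
  - intro F. split.
    + apply P_MB_P_B.
    + intros [Hn H]. split; auto. intros X d Hd. apply H. intro i; apply metric_bmetric, Hd.
Qed.
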